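(* Let $\mathscr{A}$ be quasi-abelian and identify $\mathscr{A}^\mathbb{T}$ for $\mathbb{T}=(1\to0)$, $\mathbb{S}=\{0\}$ with the arrow category $\mathrm{Arr}(\mathscr{A})$, so that $\mathscr{F}\simeq\mathscr{A}$ (arrows $0\to A$) and the reflection sends $a:A_1\to A_0$ to $\mathrm{Cok}(a)$. An extension $(f_0,f_1)$ from $a:A_1\to A_0$ to $b:B_1\to B_0$ (a commutative square $b f_1=f_0 a$ with $f_0,f_1$ regular epimorphisms) is central with respect to $\mathscr{F}$ if and only if $f_1$ is an isomorphism. If moreover $\mathscr{A}$ is abelian, it is trivial if and only if $f_1$ is an isomorphism and $f_0$ and $\mathrm{cok}(a)$ are jointly monomorphic.
   Context: Trivial extension: the naturality square of the unit of the reflection $\mathrm{Arr}(\mathscr{A})\to\mathscr{F}$ at the extension is a pullback. Central extension: its pullback along some monadic extension (regular epimorphism) is trivial. *)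

(* Defs.v *)
From HB Require Import structures.
From mathcomp Require Import all_boot all_algebra.
From Stdlib Require Import IndefiniteDescription ProofIrrelevance.

Set Implicit Arguments.
Unset Strict Implicit.
Unset Printing Implicit Defensive.

Import GRing.Theory.
Local Open Scope ring_scope.

Record Cat := Cat_ {
  ob : Type;
  hom : ob -> ob -> Type;
  idm : forall x, hom x x;
  cmp : forall x y z, hom y z -> hom x y -> hom x z;
  cmp_idl : forall x y (f : hom x y), cmp (idm y) f = f;
  cmp_idr : forall x y (f : hom x y), cmp f (idm x) = f;
  cmp_assoc : forall x y z w (h : hom z w) (g : hom y z) (f : hom x y),
      cmp h (cmp g f) = cmp (cmp h g) f }.

Arguments hom : clear implicits.
Arguments idm {_} x.
Arguments cmp {_ x y z} g f.

Section CatNotions.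
Variable C : Cat.

Definition mono x y (f : hom C x y) :=
  forall w (g h : hom C w x), cmp f g = cmp f h -> g = h.
Definition epi x y (f : hom C x y) :=
  forall z (g h : hom C y z), cmp g f = cmp h f -> g = h.
Definition iso x y (f : hom C x y) :=
  exists g : hom C y x, cmp g f = idm x /\ cmp f g = idm y.

Definition is_coequalizer w x y (u v : hom C w x) (q : hom C x y) :=
  cmp q u = cmp q v /\
  forall z (h : hom C x z), cmp h u = cmp h v -> exists! k : hom C y z, cmp k q = h.
Definition regular_epi x y (q : hom C x y) :=
  exists w (u v : hom C w x), is_coequalizer u v q.

Definition is_equalizer e x y (m : hom C e x) (u v : hom C x y) :=
  cmp u m = cmp v m /\
  forall z (h : hom C z x), cmp u h = cmp v h -> exists! k : hom C z e, cmp m k = h.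
Definition regular_mono e x (m : hom C e x) :=
  exists y (u v : hom C x y), is_equalizer m u v.

Definition is_pullback P X Y Z (p1 : hom C P X) (p2 : hom C P Y)
    (f : hom C X Z) (g : hom C Y Z) :=
  cmp f p1 = cmp g p2 /\
  forall Q (q1 : hom C Q X) (q2 : hom C Q Y), cmp f q1 = cmp g q2 ->
    exists! u : hom C Q P, cmp p1 u = q1 /\ cmp p2 u = q2.

Definition is_pushout X Y Z Q (f : hom C X Y) (g : hom C X Z)
    (q1 : hom C Y Q) (q2 : hom C Z Q) :=
  cmp q1 f = cmp q2 g /\
  forall W (h1 : hom C Y W) (h2 : hom C Z W), cmp h1 f = cmp h2 g ->
    exists! u : hom C Q W, cmp u q1 = h1 /\ cmp u q2 = h2.

Definition jointly_mono x y z (f : hom C x y) (g : hom C x z) :=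
  forall w (u v : hom C w x), cmp f u = cmp f v -> cmp g u = cmp g v -> u = v.

End CatNotions.

Record PreAddCat := PreAddCat_ {
  pa_ob : Type;
  pa_hom : pa_ob -> pa_ob -> zmodType;
  pa_id : forall x, pa_hom x x;
  pa_cmp : forall x y z, pa_hom y z -> pa_hom x y -> pa_hom x z;
  pa_cmp_idl : forall x y (f : pa_hom x y), pa_cmp (pa_id y) f = f;
  pa_cmp_idr : forall x y (f : pa_hom x y), pa_cmp f (pa_id x) = f;
  pa_cmp_assoc : forall x y z w (h : pa_hom z w) (g : pa_hom y z) (f : pa_hom x y),
      pa_cmp h (pa_cmp g f) = pa_cmp (pa_cmp h g) f;
  pa_cmpDl : forall x y z (g g' : pa_hom y z) (f : pa_hom x y),
      pa_cmp (g + g') f = pa_cmp g f + pa_cmp g' f;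
  pa_cmpDr : forall x y z (g : pa_hom y z) (f f' : pa_hom x y),
      pa_cmp g (f + f') = pa_cmp g f + pa_cmp g f' }.

Arguments pa_hom : clear implicits.
Arguments pa_id {_} x.
Arguments pa_cmp {_ x y z} g f.

Definition cat_of (A : PreAddCat) : Cat :=
  @Cat_ (pa_ob A) (fun x y => pa_hom A x y) (@pa_id A) (@pa_cmp A)
    (@pa_cmp_idl A) (@pa_cmp_idr A) (@pa_cmp_assoc A).
Coercion cat_of : PreAddCat >-> Cat.

Section PreAddNotions.
Variable A : PreAddCat.

Lemma pa_cmp0r x y z (g : pa_hom A y z) : pa_cmp g (0 : pa_hom A x y) = 0.
Proof.
have H := pa_cmpDr g (0 : pa_hom A x y) 0.
rewrite addr0 in H.
have := congr1 (fun t => t - pa_cmp g (0 : pa_hom A x y)) H.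
by rewrite /= subrr addrK => E; rewrite -E.
Qed.

Lemma pa_cmp0l x y z (f : pa_hom A x y) : pa_cmp (0 : pa_hom A y z) f = 0.
Proof.
have H := pa_cmpDl (0 : pa_hom A y z) 0 f.
rewrite addr0 in H.
have := congr1 (fun t => t - pa_cmp (0 : pa_hom A y z) f) H.
by rewrite /= subrr addrK => E; rewrite -E.
Qed.

Definition is_zero_obj (Z : pa_ob A) :=
  forall X, (forall f : pa_hom A Z X, f = 0) /\ (forall f : pa_hom A X Z, f = 0).

Definition is_biproduct (X Y P : pa_ob A) (i1 : pa_hom A X P) (i2 : pa_hom A Y P)
    (p1 : pa_hom A P X) (p2 : pa_hom A P Y) :=
  [/\ pa_cmp p1 i1 = pa_id X, pa_cmp p2 i2 = pa_id Y,
      pa_cmp p1 i2 = 0, pa_cmp p2 i1 = 0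
    & pa_cmp i1 p1 + pa_cmp i2 p2 = pa_id P].

Definition is_kernel (K X Y : pa_ob A) (f : pa_hom A X Y) (k : pa_hom A K X) :=
  pa_cmp f k = 0 /\
  forall W (h : pa_hom A W X), pa_cmp f h = 0 -> exists! u : pa_hom A W K, pa_cmp k u = h.

Definition is_cokernel (X Y C : pa_ob A) (f : pa_hom A X Y) (q : pa_hom A Y C) :=
  pa_cmp q f = 0 /\
  forall W (h : pa_hom A Y W), pa_cmp h f = 0 -> exists! u : pa_hom A C W, pa_cmp u q = h.

End PreAddNotions.

(* A zero object and cokernels are given as (chosen) data.              *)

Record QACat := QACat_ {
  qa :> PreAddCat;
  qa_zero : {Z : pa_ob qa | is_zero_obj Z};
  qa_biprod : forall X Y : pa_ob qa, exists P i1 i2 p1 p2,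
      @is_biproduct qa X Y P i1 i2 p1 p2;
  qa_ker : forall (X Y : pa_ob qa) (f : pa_hom qa X Y),
      exists K (k : pa_hom qa K X), is_kernel f k;
  qa_cok : forall (X Y : pa_ob qa) (f : pa_hom qa X Y),
      {C : pa_ob qa & {q : pa_hom qa Y C | is_cokernel f q}};
  qa_pb_regepi : forall (P X Y Z : pa_ob qa) (p1 : hom qa P X) (p2 : hom qa P Y)
      (f : hom qa X Z) (g : hom qa Y Z),
      is_pullback p1 p2 f g -> regular_epi g -> regular_epi p1;
  qa_po_regmono : forall (X Y Z Q : pa_ob qa) (f : hom qa X Y) (g : hom qa X Z)
      (q1 : hom qa Y Q) (q2 : hom qa Z Q),
      is_pushout f g q1 q2 -> regular_mono g -> regular_mono q1 }.

Definition abelian (A : QACat) :=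
  (forall (X Y : pa_ob A) (m : hom A X Y), mono m ->
      exists Z (f : pa_hom A Y Z), is_kernel f m) /\
  (forall (X Y : pa_ob A) (e : hom A X Y), epi e ->
      exists W (f : pa_hom A W X), is_cokernel f e).

Record arr (A : PreAddCat) := Arr {
  a_dom : pa_ob A;
  a_cod : pa_ob A;
  a_map : pa_hom A a_dom a_cod }.

Record sq (A : PreAddCat) (a b : arr A) := Sq {
  sq1 : pa_hom A (a_dom a) (a_dom b);
  sq0 : pa_hom A (a_cod a) (a_cod b);
  sq_comm : pa_cmp (a_map b) sq1 = pa_cmp sq0 (a_map a) }.

Section ArrCat.
Variable A : PreAddCat.

Lemma sq_ext (a b : arr A) (f g : sq a b) :
  sq1 f = sq1 g -> sq0 f = sq0 g -> f = g.
Proof.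
case: f => f1 f0 hf; case: g => g1 g0 hg /= e1 e0.
subst; f_equal; apply: proof_irrelevance.
Qed.

Lemma sq_id_comm (a : arr A) :
  pa_cmp (a_map a) (pa_id (a_dom a)) = pa_cmp (pa_id (a_cod a)) (a_map a).
Proof. by rewrite pa_cmp_idr pa_cmp_idl. Qed.

Definition sq_id (a : arr A) : sq a a := Sq (sq_id_comm a).

Lemma sq_cmp_comm (a b c : arr A) (g : sq b c) (f : sq a b) :
  pa_cmp (a_map c) (pa_cmp (sq1 g) (sq1 f)) = pa_cmp (pa_cmp (sq0 g) (sq0 f)) (a_map a).
Proof.
by rewrite pa_cmp_assoc sq_comm -pa_cmp_assoc sq_comm pa_cmp_assoc.
Qed.

Definition sq_cmp (a b c : arr A) (g : sq b c) (f : sq a b) : sq a c :=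
  Sq (sq_cmp_comm g f).

Lemma sq_cmp_idl (a b : arr A) (f : sq a b) : sq_cmp (sq_id b) f = f.
Proof. by apply: sq_ext; rewrite /= pa_cmp_idl. Qed.
Lemma sq_cmp_idr (a b : arr A) (f : sq a b) : sq_cmp f (sq_id a) = f.
Proof. by apply: sq_ext; rewrite /= pa_cmp_idr. Qed.
Lemma sq_cmp_assoc (a b c d : arr A) (h : sq c d) (g : sq b c) (f : sq a b) :
  sq_cmp h (sq_cmp g f) = sq_cmp (sq_cmp h g) f.
Proof. by apply: sq_ext; rewrite /= pa_cmp_assoc. Qed.

Definition ArrCat : Cat :=
  @Cat_ (arr A) (@sq A) sq_id sq_cmp sq_cmp_idl sq_cmp_idr sq_cmp_assoc.

Definition is_extension (a b : arr A) (f : sq a b) :=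
  regular_epi (C := cat_of A) (sq0 f) /\ regular_epi (C := cat_of A) (sq1 f).

End ArrCat.

Section Reflection.
Variable A : QACat.

Definition zobj : pa_ob A := proj1_sig (qa_zero A).
Definition Cok (a : arr A) : pa_ob A := projT1 (qa_cok (a_map a)).
Definition cokm (a : arr A) : pa_hom A (a_cod a) (Cok a) :=
  proj1_sig (projT2 (qa_cok (a_map a))).
Lemma cokm_cok (a : arr A) : is_cokernel (a_map a) (cokm a).
Proof. exact: proj2_sig (projT2 (qa_cok (a_map a))). Qed.

Definition Rob (a : arr A) : arr A := @Arr A zobj (Cok a) 0.

Lemma eta_comm (a : arr A) :
  pa_cmp (a_map (Rob a)) (0 : pa_hom A (a_dom a) zobj) = pa_cmp (cokm a) (a_map a).
Proof. by rewrite pa_cmp0r (proj1 (cokm_cok a)). Qed.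

Definition eta (a : arr A) : sq a (Rob a) := Sq (eta_comm a).

Lemma cokind_ex (a b : arr A) (f : sq a b) :
  exists! u : pa_hom A (Cok a) (Cok b), pa_cmp u (cokm a) = pa_cmp (cokm b) (sq0 f).
Proof.
apply: (proj2 (cokm_cok a)).
rewrite -pa_cmp_assoc -sq_comm pa_cmp_assoc (proj1 (cokm_cok b)).
exact: pa_cmp0l.
Qed.

Definition cokind (a b : arr A) (f : sq a b) : pa_hom A (Cok a) (Cok b) :=
  proj1_sig (constructive_indefinite_description _ (cokind_ex f)).

Lemma Rmor_comm (a b : arr A) (f : sq a b) :
  pa_cmp (a_map (Rob b)) (0 : pa_hom A zobj zobj) = pa_cmp (cokind f) (a_map (Rob a)).
Proof. by rewrite /= !pa_cmp0r. Qed.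

Definition Rmor (a b : arr A) (f : sq a b) : sq (Rob a) (Rob b) :=
  @Sq A (Rob a) (Rob b) 0 (cokind f) (Rmor_comm f).

Definition trivial_ext (a b : arr A) (f : sq a b) :=
  is_extension f /\
  is_pullback (C := ArrCat A) (eta a) f (Rmor f) (eta b).

Definition central_ext (a b : arr A) (f : sq a b) :=
  is_extension f /\
  exists (E : arr A) (p : sq E b), is_extension p /\
    exists (P : arr A) (pi1 : sq P a) (pi2 : sq P E),
      is_pullback (C := ArrCat A) pi1 pi2 f p /\ trivial_ext pi2.

End Reflection.

(* Main.v *)
Require Import Defs.
From mathcomp Require Import all_boot all_algebra.
From Stdlib Require Import ProofIrrelevance IndefiniteDescription.
Set Implicit Arguments. Unset Strict Implicit. Unset Printing Implicit Defensive.
Import GRing.Theory.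
Local Open Scope ring_scope.
Section Gen.
Variable A : PreAddCat.
Local Notation "g ∘ f" := (pa_cmp g f) (at level 40, left associativity).

Lemma cmpNr x y z (g : pa_hom A y z) (f : pa_hom A x y) : g ∘ (- f) = - (g ∘ f).
Proof. by apply/eqP; rewrite -addr_eq0 -pa_cmpDr addNr pa_cmp0r. Qed.
Lemma cmpNl x y z (g : pa_hom A y z) (f : pa_hom A x y) : (- g) ∘ f = - (g ∘ f).
Proof. by apply/eqP; rewrite -addr_eq0 -pa_cmpDl addNr pa_cmp0l. Qed.
Lemma cmpBr x y z (g : pa_hom A y z) (f f' : pa_hom A x y) : g ∘ (f - f') = g ∘ f - g ∘ f'.
Proof. by rewrite pa_cmpDr cmpNr. Qed.
Lemma cmpBl x y z (g g' : pa_hom A y z) (f : pa_hom A x y) : (g - g') ∘ f = g ∘ f - g' ∘ f.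
Proof. by rewrite pa_cmpDl cmpNl. Qed.

Lemma cok_epi X Y C (f : pa_hom A X Y) (q : pa_hom A Y C) : is_cokernel f q ->
  forall W (u v : pa_hom A C W), u ∘ q = v ∘ q -> u = v.
Proof.
move=> [qf0 H] W u v e.
have h0 : (u ∘ q) ∘ f = 0 by rewrite -pa_cmp_assoc qf0 pa_cmp0r.
have [w [_ U]] := H W _ h0.
by rewrite -(U u erefl) (U v (esym e)).
Qed.

Lemma ker_mono K X Y (f : pa_hom A X Y) (k : pa_hom A K X) : is_kernel f k ->
  forall W (u v : pa_hom A W K), k ∘ u = k ∘ v -> u = v.
Proof.
move=> [kf0 H] W u v e.
have h0 : f ∘ (k ∘ u) = 0 by rewrite pa_cmp_assoc kf0 pa_cmp0l.
have [w [_ U]] := H W _ h0.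
by rewrite -(U u erefl) (U v (esym e)).
Qed.

Lemma regepi_iso x y (q : pa_hom A x y) : regular_epi (C := cat_of A) q ->
  (forall w (u v : pa_hom A w x), q ∘ u = q ∘ v -> u = v) -> iso (C := cat_of A) q.
Proof.
move=> [w [u [v [/= E U]]]] M.
have euv := M _ _ _ E.
have [k [/= k1 _]] := U x (pa_id x) (congr1 _ euv).
exists k; split => //=.
have [l [_ L]] := U y q E.
rewrite -(L (q ∘ k)) ?(L (pa_id y)) //=; first by rewrite pa_cmp_idl.
by rewrite -pa_cmp_assoc k1 pa_cmp_idr.
Qed.

Lemma pb_jm P X Y Z (p1 : pa_hom A P X) (p2 : pa_hom A P Y) (f : pa_hom A X Z)
  (g : pa_hom A Y Z) : is_pullback (C := cat_of A) p1 p2 f g ->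
  forall W (u v : pa_hom A W P), p1 ∘ u = p1 ∘ v -> p2 ∘ u = p2 ∘ v -> u = v.
Proof.
move=> [/= E U] W u v e1 e2.
have h : f ∘ (p1 ∘ u) = g ∘ (p2 ∘ u) by rewrite !pa_cmp_assoc E.
have [w [_ U']] := U W _ _ h.
by rewrite -(U' u (conj erefl erefl)) (U' v (conj (esym e1) (esym e2))).
Qed.

End Gen.
Section ArrL.
Variable A : QACat.
Local Notation "g ∘ f" := (pa_cmp g f) (at level 40, left associativity).

Lemma zero_to (X : pa_ob A) (u v : pa_hom A X (zobj A)) : u = v.
Proof.
rewrite /zobj in u v *; case: (qa_zero A) u v => Z HZ /= u v.
by rewrite (proj2 (HZ X) u) (proj2 (HZ X) v).
Qed.

Lemma dom_pb (P X Y Z : arr A) (p1 : sq P X) (p2 : sq P Y) (f : sq X Z) (g : sq Y Z) :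
  is_pullback (C := ArrCat A) p1 p2 f g ->
  is_pullback (C := cat_of A) (sq1 p1) (sq1 p2) (sq1 f) (sq1 g).
Proof.
move=> [E U]; split; first by have := congr1 (@sq1 _ _ _) E.
move=> Q q1 q2 /= e.
pose t := @Arr A Q Q (pa_id Q).
have c1 : a_map X ∘ q1 = (a_map X ∘ q1) ∘ a_map t by rewrite pa_cmp_idr.
have c2 : a_map Y ∘ q2 = (a_map Y ∘ q2) ∘ a_map t by rewrite pa_cmp_idr.
pose m1 := @Sq A t X q1 _ c1.
pose m2 := @Sq A t Y q2 _ c2.
have em : cmp (c := ArrCat A) f m1 = cmp (c := ArrCat A) g m2.
  apply: sq_ext => /=; first exact: e.
  by rewrite !pa_cmp_assoc -(sq_comm f) -(sq_comm g) -!pa_cmp_assoc e.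
have [u [[u1 u2] U']] := U t m1 m2 em.
exists (sq1 u); split.
  by split; [have := congr1 (@sq1 _ _ _) u1 | have := congr1 (@sq1 _ _ _) u2].
move=> v [/= v1 v2].
have cv : a_map P ∘ v = (a_map P ∘ v) ∘ a_map t by rewrite pa_cmp_idr.
pose V := @Sq A t P v _ cv.
have eV : u = V.
  apply: U'; split; apply: sq_ext => //=.
    by rewrite pa_cmp_assoc -sq_comm -pa_cmp_assoc v1.
  by rewrite pa_cmp_assoc -sq_comm -pa_cmp_assoc v2.
by rewrite eV.
Qed.

Lemma cod_pb (P X Y Z : arr A) (p1 : sq P X) (p2 : sq P Y) (f : sq X Z) (g : sq Y Z) :
  is_pullback (C := ArrCat A) p1 p2 f g ->
  is_pullback (C := cat_of A) (sq0 p1) (sq0 p2) (sq0 f) (sq0 g).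
Proof.
move=> [E U]; split; first by have := congr1 (@sq0 _ _ _) E.
move=> Q q1 q2 /= e.
pose t := @Arr A (zobj A) Q 0.
have c1 : a_map X ∘ 0 = q1 ∘ a_map t by rewrite /= !pa_cmp0r.
have c2 : a_map Y ∘ 0 = q2 ∘ a_map t by rewrite /= !pa_cmp0r.
pose m1 := @Sq A t X _ q1 c1.
pose m2 := @Sq A t Y _ q2 c2.
have em : cmp (c := ArrCat A) f m1 = cmp (c := ArrCat A) g m2.
  by apply: sq_ext => /=; rewrite ?pa_cmp0r.
have [u [[u1 u2] U']] := U t m1 m2 em.
exists (sq0 u); split.
  by split; [have := congr1 (@sq0 _ _ _) u1 | have := congr1 (@sq0 _ _ _) u2].
move=> v [/= v1 v2].
have cv : a_map P ∘ 0 = v ∘ a_map t by rewrite /= !pa_cmp0r.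
pose V := @Sq A t P _ v cv.
have eV : u = V.
  by apply: U'; split; apply: sq_ext => //=; rewrite pa_cmp0r.
by rewrite eV.
Qed.

Lemma pb_comp (P X Y Z : arr A) (p1 : sq P X) (p2 : sq P Y) (f : sq X Z) (g : sq Y Z) :
  is_pullback (C := cat_of A) (sq1 p1) (sq1 p2) (sq1 f) (sq1 g) ->
  is_pullback (C := cat_of A) (sq0 p1) (sq0 p2) (sq0 f) (sq0 g) ->
  is_pullback (C := ArrCat A) p1 p2 f g.
Proof.
move=> H1 H0; have [E1 U1] := H1; have [E0 U0] := H0.
split; first by apply: sq_ext.
move=> Q q1 q2 e.
have e1 := congr1 (@sq1 _ _ _) e; have e0 := congr1 (@sq0 _ _ _) e.
simpl in e1, e0.
have [u1 [[a1 b1] V1]] := U1 _ _ _ e1.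
have [u0 [[a0 b0] V0]] := U0 _ _ _ e0.
simpl in a1, b1, a0, b0.
have cu : a_map P ∘ u1 = u0 ∘ a_map Q.
  apply: (pb_jm H0).
    rewrite /= pa_cmp_assoc -sq_comm -pa_cmp_assoc a1 pa_cmp_assoc a0.
    by rewrite sq_comm.
  rewrite /= pa_cmp_assoc -sq_comm -pa_cmp_assoc b1 pa_cmp_assoc b0.
  by rewrite sq_comm.
exists (@Sq A Q P u1 u0 cu); split.
  by split; apply: sq_ext.
move=> v [/= ev1 ev2].
apply: sq_ext => /=.
  apply: V1; split; [exact: (congr1 (@sq1 _ _ _) ev1) | exact: (congr1 (@sq1 _ _ _) ev2)].
apply: V0; split; [exact: (congr1 (@sq0 _ _ _) ev1) | exact: (congr1 (@sq0 _ _ _) ev2)].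
Qed.

End ArrL.
Section Main.
Variable A : QACat.
Local Notation "g ∘ f" := (pa_cmp g f) (at level 40, left associativity).

Lemma triv_mono (a b : arr A) (f : sq a b) :
  is_pullback (C := ArrCat A) (eta a) f (Rmor f) (eta b) ->
  forall W (u v : pa_hom A W (a_dom a)), sq1 f ∘ u = sq1 f ∘ v -> u = v.
Proof.
move=> H W u v e; apply: (pb_jm (dom_pb H)) => //; exact: zero_to.
Qed.

Lemma central_iso (a b : arr A) (f : sq a b) :
  central_ext f -> iso (C := cat_of A) (sq1 f).
Proof.
move=> [[_ Hf1] [E [p [_ [P [pi1 [pi2 [Hpb [_ Htr]]]]]]]]].
apply: (regepi_iso Hf1) => W u v e.
have Hm := triv_mono Htr.
have [H1 U1] := dom_pb Hpb.
have e' : sq1 f ∘ (u - v) = sq1 p ∘ 0 by rewrite cmpBr e subrr pa_cmp0r.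
have [k [[k1 k2] _]] := U1 _ _ _ e'.
simpl in k1, k2.
have k0 : k = 0 by apply: Hm; rewrite k2 pa_cmp0r.
by apply/eqP; rewrite -subr_eq0; apply/eqP; rewrite -k1 k0 pa_cmp0r.
Qed.

Lemma trivial_nec (a b : arr A) (f : sq a b) :
  trivial_ext f -> iso (C := cat_of A) (sq1 f) /\
        jointly_mono (C := cat_of A) (sq0 f) (cokm a).
Proof.
move=> [Hext Hpb]; split; first exact: (regepi_iso Hext.2 (triv_mono Hpb)).
move=> w u v /= e1 e2; exact: (pb_jm (cod_pb Hpb) e2 e1).
Qed.

End Main.
Section B.
Variable A : QACat.
Local Notation "g ∘ f" := (pa_cmp g f) (at level 40, left associativity).

Lemma cokind_spec (a b : arr A) (f : sq a b) : cokind f ∘ cokm a = cokm b ∘ sq0 f.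
Proof.
rewrite /cokind; case: (constructive_indefinite_description _ _) => u [/= H _].
exact: H.
Qed.

Lemma id_regepi (x : pa_ob A) : regular_epi (C := cat_of A) (pa_id x).
Proof.
exists x, (pa_id x), (pa_id x); split => // z h _.
exists h; split => /=; first by rewrite pa_cmp_idr.
by move=> k /=; rewrite pa_cmp_idr.
Qed.

Lemma iso_central (a b : arr A) (f : sq a b) :
  is_extension f -> iso (C := cat_of A) (sq1 f) -> central_ext f.
Proof.
move=> Hext [g [/= gf fg]].
have [K [k Hk]] := qa_ker (sq0 f).
have [S [i1 [i2 [r1 [r2 [Br1 Br2 Br12 Br21 Bid]]]]]] := qa_biprod (a_cod a) K.
have bexp : forall W (v : pa_hom A W S), v = i1 ∘ (r1 ∘ v) + i2 ∘ (r2 ∘ v).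
  by move=> W v; rewrite !pa_cmp_assoc -pa_cmpDl Bid pa_cmp_idl.
pose P := @Arr A (a_dom a) S (i1 ∘ a_map a).
have c1 : a_map a ∘ pa_id _ = (r1 + k ∘ r2) ∘ a_map P.
  rewrite /= pa_cmp_idr pa_cmpDl !pa_cmp_assoc Br1 pa_cmp_idl.
  by rewrite -(pa_cmp_assoc k r2 i1) Br21 pa_cmp0r pa_cmp0l addr0.
have c2 : a_map a ∘ pa_id _ = r1 ∘ a_map P.
  by rewrite /= pa_cmp_idr pa_cmp_assoc Br1 pa_cmp_idl.
pose pi1 := @Sq A P a _ _ c1.
pose pi2 := @Sq A P a _ _ c2.
have f1mono : forall W (u v : pa_hom A W (a_dom a)), sq1 f ∘ u = sq1 f ∘ v -> u = v.
  move=> W u v e; rewrite -(pa_cmp_idl u) -(pa_cmp_idl v) -gf -!pa_cmp_assoc.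
  by rewrite e.
have kf0 := proj1 Hk.
have Hpb : is_pullback (C := ArrCat A) pi1 pi2 f f.
  apply: pb_comp.
    split => // Q q1 q2 /= e.
    have eq := f1mono _ _ _ e; subst q2.
    exists q1; split; first by rewrite /= pa_cmp_idl.
    by move=> v [/= <- _]; rewrite pa_cmp_idl.
  split.
    by rewrite /= pa_cmpDr pa_cmp_assoc kf0 pa_cmp0l addr0.
  move=> Q q1 q2 /= e.
  have e' : sq0 f ∘ (q1 - q2) = 0 by rewrite cmpBr e subrr.
  have [t [kt U]] := (proj2 Hk) Q _ e'.
  exists (i1 ∘ q2 + i2 ∘ t); split.
    split => /=.
      rewrite pa_cmpDr !pa_cmpDl !pa_cmp_assoc Br1 Br12 pa_cmp_idl !pa_cmp0l.
      rewrite -(pa_cmp_assoc k r2 i1) -(pa_cmp_assoc k r2 i2) Br21 Br2.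
      by rewrite pa_cmp0r pa_cmp0l pa_cmp_idr kt add0r addr0 addrC subrK.
    by rewrite pa_cmpDr !pa_cmp_assoc Br1 Br12 pa_cmp_idl pa_cmp0l addr0.
  move=> v [/= v1 v2].
  have : r2 ∘ v = t.
    symmetry; apply: U; rewrite pa_cmp_assoc -v1 -v2 pa_cmpDl addrC addKr //.
  by move=> <-; rewrite -v2 -bexp.
have r1reg : regular_epi (C := cat_of A) r1.
  exists K, i2, 0; split; first by rewrite /= Br12 pa_cmp0r.
  move=> z h /= e; rewrite pa_cmp0r in e.
  exists (h ∘ i1); split => /=.
    rewrite -pa_cmp_assoc.
    have -> : i1 ∘ r1 = pa_id S - i2 ∘ r2 by rewrite -Bid addrK.
    by rewrite cmpBr pa_cmp_assoc e pa_cmp0l pa_cmp_idr subr0.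
  by move=> l <-; rewrite -pa_cmp_assoc Br1 pa_cmp_idr.
pose cP := cokm_cok P.
have r2P : r2 ∘ a_map P = 0 by rewrite /= pa_cmp_assoc Br21 pa_cmp0l.
have [s [sP _]] := (proj2 cP) K r2 r2P.
have ciP : (cokm P ∘ i1) ∘ a_map a = 0 by rewrite -pa_cmp_assoc (proj1 cP).
have [c [cP' _]] := (proj2 (cokm_cok a)) _ _ ciP.
have dec : c ∘ cokind pi2 + (cokm P ∘ i2) ∘ s = pa_id (Cok P).
  apply: (cok_epi cP); rewrite pa_cmp_idl pa_cmpDl -!pa_cmp_assoc sP cokind_spec.
  by rewrite pa_cmp_assoc cP' /= -!pa_cmp_assoc -pa_cmpDr Bid pa_cmp_idr.
have Htr : trivial_ext pi2.
  split; first by split => //=; exact: id_regepi.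
  apply: pb_comp.
    split => /=; first exact: zero_to.
    move=> Q q1 q2 _; exists q2; split.
      by split; [apply: zero_to | rewrite /= pa_cmp_idl].
    by move=> v [_ /= <-]; rewrite pa_cmp_idl.
  split => /=; first exact: (cokind_spec pi2).
  move=> Q q1 q2 /= e.
  exists (i1 ∘ q2 + i2 ∘ (s ∘ q1)); split.
    split => /=.
      rewrite -[RHS]pa_cmp_idl -dec pa_cmpDl -(pa_cmp_assoc c) e.
      by rewrite (pa_cmp_assoc c) cP' pa_cmpDr !pa_cmp_assoc.
    by rewrite pa_cmpDr !pa_cmp_assoc Br1 Br12 pa_cmp_idl !pa_cmp0l addr0.
  move=> v [/= v1 v2].
  by rewrite (bexp _ v) v2 -v1 (pa_cmp_assoc s) sP.
split => //; exists a, f; split => //.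
by exists P, pi1, pi2.
Qed.

End B.
Section C.
Variable A : QACat.
Local Notation "g ∘ f" := (pa_cmp g f) (at level 40, left associativity).

Lemma trivial_suff (a b : arr A) (f : sq a b) : abelian A ->
  is_extension f -> iso (C := cat_of A) (sq1 f) ->
  jointly_mono (C := cat_of A) (sq0 f) (cokm a) -> trivial_ext f.
Proof.
move=> Hab Hext [g [/= gf fg]] Hjm.
have [S [j1 [j2 [r1 [r2 [B1 B2 B12 B21 Bid]]]]]] := qa_biprod (a_cod b) (Cok a).
pose M := j1 ∘ sq0 f + j2 ∘ cokm a.
have r1M : r1 ∘ M = sq0 f.
  by rewrite pa_cmpDr !pa_cmp_assoc B1 B12 pa_cmp_idl pa_cmp0l addr0.
have r2M : r2 ∘ M = cokm a.
  by rewrite pa_cmpDr !pa_cmp_assoc B21 B2 pa_cmp_idl pa_cmp0l add0r.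
have Mmono : mono (C := cat_of A) M.
  move=> W u v /= e; apply: Hjm => /=.
    by rewrite -r1M -!pa_cmp_assoc e.
  by rewrite -r2M -!pa_cmp_assoc e.
have [Z [G HG]] := (proj1 Hab) _ _ M Mmono.
pose D := cokm b ∘ r1 - cokind f ∘ r2.
have Dj1 : D ∘ j1 = cokm b.
  by rewrite /D cmpBl -!pa_cmp_assoc B1 B21 pa_cmp_idr pa_cmp0r subr0.
have Dj2 : D ∘ j2 = - cokind f.
  by rewrite /D cmpBl -!pa_cmp_assoc B12 B2 pa_cmp0r pa_cmp_idr sub0r.
have HD : is_cokernel M D.
  split.
    by rewrite /D cmpBl -!pa_cmp_assoc r1M r2M cokind_spec subrr.
  move=> W h hM0.
  have e12 : (h ∘ j1) ∘ sq0 f + (h ∘ j2) ∘ cokm a = 0.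
    by rewrite -!pa_cmp_assoc -pa_cmpDr.
  have hf : (h ∘ j1) ∘ sq0 f = - ((h ∘ j2) ∘ cokm a).
    by apply/eqP; rewrite -addr_eq0 e12.
  have hb : (h ∘ j1) ∘ a_map b = 0.
    rewrite -(pa_cmp_idr (a_map b)) -fg (pa_cmp_assoc (a_map b)) sq_comm.
    rewrite !pa_cmp_assoc hf !cmpNl -(pa_cmp_assoc (h ∘ j2)) (proj1 (cokm_cok a)).
    by rewrite pa_cmp0r pa_cmp0l oppr0.
  have [u [uq U]] := (proj2 (cokm_cok b)) W _ hb.
  have uc : u ∘ cokind f = - (h ∘ j2).
    apply: (cok_epi (cokm_cok a)).
    by rewrite -pa_cmp_assoc cokind_spec pa_cmp_assoc uq hf cmpNl.
  exists u; split.
    rewrite /D cmpBr !pa_cmp_assoc uq uc cmpNl opprK -!pa_cmp_assoc -pa_cmpDr.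
    by rewrite Bid pa_cmp_idr.
  by move=> v vD; apply: U; rewrite -vD -pa_cmp_assoc Dj1.
have MkerD : is_kernel D M.
  split; first exact: (proj1 HD).
  move=> W h Dh.
  have [G' [G'q _]] := (proj2 HD) Z G (proj1 HG).
  apply: (proj2 HG).
  by rewrite -G'q -pa_cmp_assoc Dh pa_cmp0r.
split => //; apply: pb_comp.
  split => /=; first exact: zero_to.
  move=> Q q1 q2 e; exists (g ∘ q2); split.
    by split; [apply: zero_to | rewrite /= pa_cmp_assoc fg pa_cmp_idl].
  by move=> v [_ /= <-]; rewrite pa_cmp_assoc gf pa_cmp_idl.
split => /=; first exact: (cokind_spec f).
move=> Q q1 q2 /= e.
have hD : D ∘ (j1 ∘ q2 + j2 ∘ q1) = 0.
  by rewrite pa_cmpDr !pa_cmp_assoc Dj1 Dj2 cmpNl e subrr.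
have [u [Mu _]] := (proj2 MkerD) Q _ hD.
have hu1 : cokm a ∘ u = q1.
  by rewrite -r2M -pa_cmp_assoc Mu pa_cmpDr !pa_cmp_assoc B21 B2 pa_cmp0l pa_cmp_idl add0r.
have hu2 : sq0 f ∘ u = q2.
  by rewrite -r1M -pa_cmp_assoc Mu pa_cmpDr !pa_cmp_assoc B1 B12 pa_cmp0l pa_cmp_idl addr0.
exists u; split; first by split.
move=> v [/= v1 v2]; apply: Hjm => /=.
  by rewrite hu2 v2.
by rewrite hu1 v1.
Qed.

End C.

Unset Implicit Arguments.
Local Close Scope ring_scope.

Theorem mainTheorem6 (A : QACat) (a b : arr A) (f : sq a b) :
  is_extension f ->
  (central_ext f <-> iso (C := cat_of A) (sq1 f)) /\
  (abelian A ->
     (trivial_ext f <->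
        iso (C := cat_of A) (sq1 f) /\
        jointly_mono (C := cat_of A) (sq0 f) (cokm a))).
Proof.
move=> Hext; split.
  split; [exact: central_iso | exact: iso_central].
move=> Hab; split; first exact: trivial_nec.
by move=> [Hi Hj]; exact: trivial_suff.
Qed.
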